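(* Let $n\ge2$ and let $A=(a_{ij})$ be an $n\times n$ nonnegative irreducible matrix with row sums $r_1\ge r_2\ge\cdots\ge r_n$ (where $r_i=\sum_j a_{ij}$). Let $M=\max_{1\le i\le n}a_{ii}$ and $N=\max_{i\ne j}a_{ij}$, and assume $N>0$. Then for $1\le i\le n$, \[\rho(A)\le \frac{r_i+M-N+\sqrt{(r_i-M+N)^2+4N\sum_{k=1}^{i-1}(r_k-r_i)}}{2}.\] Equality holds if and only if $r_1=\cdots=r_n$, or for some $2\le t\le i$: (i) $a_{kk}=M$ for $1\le k\le t-1$; (ii) $a_{kl}=N$ for all $1\le k\le n$, $1\le l\le t-1$, $k\ne l$; (iii) $r_t=\cdots=r_n$.
   Context: $\rho(A)$ denotes the spectral radius of $A$. An empty sum equals $0$. *)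

(* Defs.v *)
From HB Require Import structures.
From mathcomp Require Import all_boot all_order all_algebra.
Set Implicit Arguments. Unset Strict Implicit. Unset Printing Implicit Defensive.
Import Order.TTheory GRing.Theory Num.Theory.
Local Open Scope ring_scope.

(* A list of the eigenvalues (with algebraic multiplicity) of a square
   matrix over an algebraically closed numeric field: the roots of its
   characteristic polynomial. *)
Definition eigen_seq (C : numClosedFieldType) (n : nat) (A : 'M[C]_n) : seq C :=
  sval (closed_field_poly_normal (char_poly A)).

Definition spectral_radius (C : numClosedFieldType) (n : nat) (A : 'M[C]_n) : C :=
  \big[Num.max/0]_(z <- eigen_seq A) `|z|.

(* Irreducibility: A is not permutation-similar to a block upper triangular
   matrix [[B, *], [0, D]] with square nonempty B, D; i.e. there is no
   nonempty proper index set S with a_ij = 0 for all i not in S, j in S. *)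
Definition irreducible_mx (C : numClosedFieldType) (n : nat) (A : 'M[C]_n) : Prop :=
  forall S : {set 'I_n}, S != set0 -> S != setT ->
    exists i j, [/\ i \notin S, j \in S & A i j != 0].

Definition row_sum (C : numClosedFieldType) (n : nat) (A : 'M[C]_n) (i : 'I_n) : C :=
  \sum_(j < n) A i j.

(* Main.v *)
Require Import Defs.
From HB Require Import structures.
From mathcomp Require Import all_boot all_order all_algebra.
Import Order.TTheory GRing.Theory Num.Theory.
Local Open Scope ring_scope.
From mathcomp Require Import ring.
Section BM.
Variable C : numClosedFieldType.
Lemma max2_cases (x y : C) : 0 <= x -> 0 <= y ->
  [/\ x <= Num.max x y, y <= Num.max x y,
      (Num.max x y = x \/ Num.max x y = y) &
      forall c, x <= c -> y <= c -> Num.max x y <= c].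
Proof.
move=> x0 y0; have xr := ger0_real x0; have yr := ger0_real y0.
case: (real_leP xr yr) => h; split => //;
  solve [exact: ltW | by left | by right | by move=> c].
Qed.
Arguments max2_cases {x y}.

Variables (I : eqType) (P : pred I) (F : I -> C).
Hypothesis F0 : forall x, P x -> 0 <= F x.

Lemma bm_ge0 s : 0 <= \big[Num.max/0]_(x <- s | P x) F x.
Proof.
elim: s => [|a s IH]; rewrite ?big_nil ?big_cons //.
case: ifP => // Pa; have [h _ _ _] := max2_cases (F0 _ Pa) IH; by apply: le_trans h; apply: F0.
Qed.

Lemma bm_ub s x : x \in s -> P x -> F x <= \big[Num.max/0]_(x <- s | P x) F x.
Proof.
elim: s => [|a s IH] //; rewrite in_cons big_cons => /orP[/eqP->|xs] Px.
  by rewrite Px; have [] := max2_cases (F0 _ Px) (bm_ge0 s).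
case: ifP => Pa; last exact: IH.
have [_ h _ _] := max2_cases (F0 _ Pa) (bm_ge0 s); by apply: le_trans h; apply: IH.
Qed.

Lemma bm_le s c : 0 <= c -> (forall x, x \in s -> P x -> F x <= c) ->
  \big[Num.max/0]_(x <- s | P x) F x <= c.
Proof.
move=> c0; elim: s => [|a s IH] h; rewrite ?big_nil ?big_cons //.
have IH' : \big[Num.max/0]_(x <- s | P x) F x <= c.
  by apply: IH => x xs; apply: h; rewrite in_cons xs orbT.
case: ifP => // Pa; have [_ _ _ ->] := max2_cases (F0 _ Pa) (bm_ge0 s) => //.
by apply: h; rewrite ?in_cons ?eqxx.
Qed.

Lemma bm_attained s : \big[Num.max/0]_(x <- s | P x) F x = 0 \/
  exists x, [/\ x \in s, P x & F x = \big[Num.max/0]_(x <- s | P x) F x].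
Proof.
elim: s => [|a s IH]; rewrite ?big_nil ?big_cons; first by left.
case: ifP => Pa.
  have [_ _ [->|->] _] := max2_cases (F0 _ Pa) (bm_ge0 s).
    by right; exists a; rewrite in_cons eqxx.
  case: IH => [E|[x [xs Px E]]]; first by left.
  by right; exists x; rewrite in_cons xs orbT.
case: IH => [E|[x [xs Px E]]]; first by left.
by right; exists x; rewrite in_cons xs orbT.
Qed.
End BM.

Lemma char_poly_tr (C : numClosedFieldType) n (A : 'M[C]_n) : char_poly A^T = char_poly A.
Proof.
rewrite /char_poly -det_tr; congr (\det _); apply/matrixP => a b.
by rewrite !mxE eq_sym.
Qed.

Lemma eig_inE (C : numClosedFieldType) n (A : 'M[C]_n) z :
  (z \in eigen_seq A) <-> (exists2 v : 'rV_n, v *m A^T = z *: v & v != 0).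
Proof.
rewrite /eigen_seq; case: closed_field_poly_normal => r /= E.
have -> : (z \in r) = root (char_poly A) z.
  rewrite E rootZ ?root_prod_XsubC //.
  by rewrite (monicP (char_poly_monic A)) oner_eq0.
rewrite -char_poly_tr -eigenvalue_root_char.
by split => [/eigenvalueP|/eigenvalueP].
Qed.
Theorem corollary1 (C : numClosedFieldType) (n : nat) (A : 'M[C]_n)
  (hn : (2 <= n)%N)
  (hnonneg : forall i j, 0 <= A i j)
  (hirr : irreducible_mx A)
  (hsorted : forall i j : 'I_n, (i <= j)%N -> row_sum A j <= row_sum A i)
  (M N : C)
  (hM : M = \big[Num.max/0]_(k < n) A k k)
  (hN : N = \big[Num.max/0]_(k < n) \big[Num.max/0]_(l < n | k != l) A k l)
  (hNpos : 0 < N)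
  (i : 'I_n) :
  let bound :=
    (row_sum A i + M - N
      + sqrtC ((row_sum A i - M + N) ^+ 2
               + 4%:R * N * \sum_(k < n | (k < i)%N) (row_sum A k - row_sum A i))) / 2%:R in
  spectral_radius A <= bound /\
  (spectral_radius A = bound <->
     (forall k l : 'I_n, row_sum A k = row_sum A l) \/
     exists t : 'I_n, [/\ (1 <= t)%N, (t <= i)%N,
        (forall k : 'I_n, (k < t)%N -> A k k = M),
        (forall k l : 'I_n, (l < t)%N -> k != l -> A k l = N) &
        (forall k : 'I_n, (t <= k)%N -> row_sum A k = row_sum A t)]).
Proof.
cbv zeta.
set r := row_sum A.
set S := \sum_(k < n | (k < i)%N) (r k - r i).
set D := (r i - M + N) ^+ 2 + 4%:R * N * S.
set s := sqrtC D.
set b := (r i + M - N + s) / 2%:R.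
have r0 k : 0 <= r k by apply: sumr_ge0 => l _.
have rreal k : r k \is Num.real by exact: ger0_real.
have hAM k : A k k <= M.
  rewrite hM; apply: (@bm_ub C _ (fun _ => true) (fun k => A k k)) => //.
  exact: mem_index_enum.
have hM0 : 0 <= M by rewrite hM; apply: (@bm_ge0 C _ (fun _ => true) (fun k => A k k)).
have hAN k l : k != l -> A k l <= N.
  move=> kl; rewrite hN.
  apply: le_trans (@bm_ub C _ (fun _ => true) (fun k => \big[Num.max/0]_(l < n | k != l) A k l) _ _ k _ _) => //; last exact: mem_index_enum.
    by apply: (@bm_ub C _ (fun l => k != l) (fun l => A k l)) => //; exact: mem_index_enum.
  by move=> k' _; apply: (@bm_ge0 C _ (fun l => k' != l) (fun l => A k' l)).
have S0 : 0 <= S by apply: sumr_ge0 => k ki; rewrite subr_ge0; apply: hsorted; exact: ltnW.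
have D0 : 0 <= D.
  apply: addr_ge0; first by rewrite -realEsqr realD ?realB ?ger0_real // ltW.
  by apply: mulr_ge0 => //; apply: mulr_ge0 => //; exact: ltW.
have s0 : 0 <= s by rewrite sqrtC_ge0.
have s2 : s ^+ 2 = D by rewrite sqrtCK.
set q := b - M + N.
have quad : (b - r i) * q = N * S.
  apply/eqP; rewrite -subr_eq0; apply/eqP.
  have -> : (b - r i) * q - N * S = (s ^+ 2 - D) / 4%:R by rewrite /q /b /D; field.
  by rewrite s2 subrr mul0r.
pose i0 : 'I_n := Ordinal (leq_ltn_trans (leq0n i) (ltn_ord i)).
have Akk_r k : A k k <= r k.
  by rewrite /r /row_sum (bigD1 k) //= lerDl sumr_ge0.
have hMr0 : M <= r i0.
  rewrite hM; apply: (@bm_le C _ (fun _ => true) (fun k => A k k)) => // k _ _.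
  by apply: le_trans (Akk_r k) _; apply: hsorted.
have Nreal : N \is Num.real by apply: ger0_real; exact: ltW.
have Mreal : M \is Num.real by apply: ger0_real.
have creal : r i - M + N \is Num.real by rewrite realD ?realB.
have q0 : 0 < q.
  have -> : q = (r i - M + N + s) / 2%:R by rewrite /q /b; field.
  apply: divr_gt0; last by rewrite ltr0n.
  case: (real_ltP (real0 C) creal) => [c_gt0 | c_le0].
    by apply: (lt_le_trans c_gt0); rewrite lerDl.
  have riM : r i < M.
    have h1 : r i + N <= M.
      by rewrite -subr_ge0 -oppr_le0; have -> : - (M - (r i + N)) = r i - M + N by ring.
    by apply: lt_le_trans h1; rewrite -subr_gt0 addrC addKr.
  have ii0 : (i0 < i)%N.
    rewrite /= lt0n; apply/negP => /eqP i_0.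
    have : i = i0 by apply: val_inj.
    by move=> E; move: riM; rewrite E => /lt_le_trans /(_ hMr0); rewrite ltxx.
  have Spos : 0 < S.
    rewrite /S (bigD1 i0) //=; apply: (lt_le_trans (y := r i0 - r i)).
      by rewrite subr_gt0; exact: lt_le_trans riM hMr0.
    by rewrite lerDl; apply: sumr_ge0 => k /andP [ki _]; rewrite subr_ge0; apply: hsorted; exact: ltnW.
  have : (- (r i - M + N)) ^+ 2 < s ^+ 2.
    rewrite s2 sqrrN /D -[X in X < _]addr0 ltrD2l.
    by apply: mulr_gt0 => //; apply: mulr_gt0 => //; rewrite ltr0n.
  rewrite ltr_sqr ?nnegrE ?oppr_ge0 //.
  by rewrite -subr_gt0 opprK addrC.
have bri : 0 <= b - r i by rewrite -(pmulr_lge0 _ q0) quad; apply: mulr_ge0 => //; exact: ltW.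
have b0 : 0 <= b by apply: le_trans (r0 i) _; rewrite -subr_ge0.
have qn0 : q != 0 by rewrite gt_eqF.
pose e (l : 'I_n) := if (l < i)%N then (r l - r i) / q else 0.
pose x (l : 'I_n) := 1 + e l.
pose bnd (k l : 'I_n) := if k == l then M else N.
pose w (k : 'I_n) := r i - r k + q * e k.
pose gap (k : 'I_n) := \sum_l (bnd k l - A k l) * e l + w k.
have e0 l : 0 <= e l.
  rewrite /e; case: ifP => // li; apply: divr_ge0; last exact: ltW.
  by rewrite subr_ge0; apply: hsorted; exact: ltnW.
have x0 l : 0 < x l by rewrite /x; apply: (lt_le_trans ltr01); rewrite lerDl.
have wlt (k : 'I_n) : (k < i)%N -> w k = 0.
  by move=> ki; rewrite /w /e ki mulrC divfK // addrC subrKA subrr.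
have w0 (k : 'I_n) : 0 <= w k.
  case: (boolP (k < i)%N) => ki; first by rewrite wlt.
  rewrite /w /e (negbTE ki) mulr0 addr0 subr_ge0; apply: hsorted; by rewrite leqNgt.
have bnd0 k l : 0 <= bnd k l - A k l.
  rewrite subr_ge0 /bnd; case: eqP => [<-|/eqP]; [exact: hAM | exact: hAN].
have gap0 k : 0 <= gap k.
  by apply: addr_ge0 => //; apply: sumr_ge0 => l _; apply: mulr_ge0.
have sume : \sum_l e l = S / q.
  rewrite /S mulr_suml [RHS]big_mkcond /=; apply: eq_bigr => l _; by rewrite /e; case: ifP.
have key k : b * x k = \sum_l A k l * x l + gap k.
  have h1 : \sum_l A k l * x l = r k + \sum_l A k l * e l.
    by rewrite /r /row_sum -big_split /=; apply: eq_bigr => l _; rewrite /x mulrDr mulr1.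
  have h2 : \sum_l bnd k l * e l = N * \sum_l e l + (M - N) * e k.
    rewrite (bigD1 k) //= [X in N * X](bigD1 k) //= /bnd eqxx mulrDr mulr_sumr.
    rewrite (eq_bigr (fun l => N * e l)); last by move=> l /negbTE; rewrite eq_sym => ->.
    ring.
  have h3 : N * \sum_l e l = b - r i.
    by rewrite sume mulrA -quad mulfK.
  rewrite h1 /gap /w.
  have -> : \sum_l (bnd k l - A k l) * e l = \sum_l bnd k l * e l - \sum_l A k l * e l.
    by rewrite -sumrB; apply: eq_bigr => l _; rewrite mulrBl.
  rewrite h2 h3 /x /q; ring.
have eigb z (v : 'rV_n) : v *m A^T = z *: v -> v != 0 ->
    `|z| <= b /\ (`|z| = b -> forall k, gap k = 0).
  move=> hv vn0.
  have hent k : z * v 0 k = \sum_l A k l * v 0 l.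
    have := congr1 (fun M0 : 'M[C]_(1,n) => M0 0 k) hv; rewrite !mxE => <-.
    by apply: eq_bigr => l _; rewrite !mxE mulrC.
  pose u l := `|v 0 l| / x l.
  have u0 l : 0 <= u l by apply: divr_ge0 => //; exact: ltW.
  pose m := \big[Num.max/0]_(l < n) u l.
  have um l : u l <= m.
    by apply: (@bm_ub C _ (fun _ => true) u) => //; exact: mem_index_enum.
  have [l1 vl1] : exists l, v 0 l != 0.
    apply/existsP; move: vn0; apply: contraR; rewrite negb_exists => /forallP h.
    by apply/eqP/matrixP => a l; rewrite (ord1 a) mxE; apply/eqP; move: (h l); rewrite negbK.
  have m0 : 0 < m.
    apply: lt_le_trans (um l1); apply: divr_gt0 => //; by rewrite normr_gt0.
  have [k0 uk0] : exists k, u k = m.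
    case: (@bm_attained C _ (fun _ => true) u (fun l _ => u0 l) (index_enum 'I_n)).
      by move=> E; move: m0; rewrite /m E ltxx.
    by move=> [k [_ _ E]]; exists k.
  have vx l : `|v 0 l| = x l * u l by rewrite /u mulrC divfK // gt_eqF.
  have chain k : `|z| * (x k * u k) <= \sum_l A k l * x l * u l /\
       \sum_l A k l * x l * u l <= (b * x k - gap k) * m.
    split.
      rewrite -vx -normrM hent; apply: le_trans (ler_norm_sum _ _ _) _.
      by apply: ler_sum => l _; rewrite normrM ger0_norm // vx mulrA.
    rewrite key addrK mulr_suml; apply: ler_sum => l _.
    by apply: ler_wpM2l => //; apply: mulr_ge0 => //; exact: ltW.
  have xm0 k : 0 < x k * m by apply: mulr_gt0.
  have zb : `|z| <= b.
    have [c1 c2] := chain k0; rewrite uk0 in c1.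
    rewrite -(ler_pM2r (xm0 k0)); apply: le_trans (le_trans c1 c2) _.
    rewrite mulrA ler_wpM2r //; first exact: ltW.
    by rewrite mulrC gerDl oppr_le0.
  split => // zeq.
  have closed k : u k = m -> gap k = 0 /\ forall l, A k l != 0 -> u l = m.
    move=> ukm; have [c1 c2] := chain k; rewrite ukm zeq in c1.
    have g0 : gap k * m = 0.
      apply/eqP; rewrite eq_le mulr_ge0 ?(ltW m0) // andbT.
      have := le_trans c1 c2; rewrite mulrBl.
      by rewrite -[b * x k * m]mulrA lerDl oppr_ge0.
    have gk : gap k = 0 by move/eqP: g0; rewrite mulf_eq0 (gt_eqF m0) orbF => /eqP.
    split => //.
    have T : \sum_l A k l * x l * m - \sum_l A k l * x l * u l = 0.
      apply/eqP; rewrite subr_eq0 eq_le; apply/andP; split.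
        apply: le_trans c1; rewrite -mulr_suml.
        by have := key k; rewrite gk addr0 => <-; rewrite mulrA.
      apply: ler_sum => l _; apply: ler_wpM2l => //; apply: mulr_ge0 => //; exact: ltW.
    rewrite -sumrB in T => l Akl.
    have nn : forall l, true -> 0 <= A k l * x l * m - A k l * x l * u l.
      move=> l' _; rewrite -mulrBr; apply: mulr_ge0; last by rewrite subr_ge0.
      by apply: mulr_ge0 => //; exact: ltW.
    have := psumr_eq0P nn T (i := l) isT; rewrite -mulrBr => /eqP.
    rewrite mulf_eq0 mulf_eq0 (negbTE Akl) (gt_eqF (x0 l)) /= subr_eq0 => /eqP.
    by move=> ->.
  pose Sset := [set k | u k == m].
  have allS k : k \in Sset.
    apply/negPn/negP => kS.
    have [||a [c [aT cT Aac]]] := hirr (~: Sset).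
    - by apply/set0Pn; exists k; rewrite in_setC.
    - apply/eqP => E; have : k0 \in ~: Sset by rewrite E inE.
      by rewrite in_setC inE uk0 eqxx.
    move: aT cT; rewrite !in_setC !inE negbK => /eqP ua /eqP uc.
    by apply: uc; have [_] := closed a ua; apply.
  by move=> k; have := allS k; rewrite inE => /eqP /closed [].
have specle : spectral_radius A <= b.
  rewrite /spectral_radius.
  apply: (@bm_le C _ (fun _ => true) (fun z => `|z|) (fun z _ => normr_ge0 z) _ _ b0) => z zin _.
  by have [v hv vn0] := (@eig_inE C n A z).1 zin; have [] := eigb z v hv vn0.
have gapP k : gap k = 0 <-> (forall l, (bnd k l - A k l) * e l = 0) /\ w k = 0.
  split.
    move=> /eqP; rewrite /gap paddr_eq0 ?sumr_ge0 // => [/andP [/eqP hs /eqP hw]|l _].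
      split => // l; apply: (psumr_eq0P _ hs (i := l) isT) => l' _; exact: mulr_ge0.
    exact: mulr_ge0.
  by move=> [hl hw]; rewrite /gap hw addr0; apply: big1 => l _; exact: hl.
have eq_gaps : spectral_radius A = b -> forall k, gap k = 0.
  move=> E k.
  case: (@bm_attained C _ (fun _ => true) (fun z => `|z|) (fun z _ => normr_ge0 z) (eigen_seq A)).
    rewrite -/(spectral_radius A) E => b_0.
    apply: le_anti; rewrite gap0 andbT.
    have := key k; rewrite b_0 mul0r => /esym/eqP; rewrite addrC addr_eq0 => /eqP ->.
    rewrite oppr_le0; apply: sumr_ge0 => l _; apply: mulr_ge0 => //; exact: ltW.
  move=> [z [zin _ Ez]]; rewrite -/(spectral_radius A) E in Ez.
  have [v hv vn0] := (@eig_inE C n A z).1 zin; have [_] := eigb z v hv vn0; by apply.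
have gaps_eq : (forall k, gap k = 0) -> spectral_radius A = b.
  move=> hg; apply: le_anti; rewrite specle /=.
  rewrite -{1}(ger0_norm b0) /spectral_radius.
  apply: (@bm_ub C _ (fun _ => true) (fun z => `|z|) (fun z _ => normr_ge0 z)) => //.
  apply/(@eig_inE C n A b); exists (\row_l x l).
    apply/matrixP => a c; rewrite (ord1 a) !mxE.
    have := key c; rewrite hg addr0 => ->.
    by apply: eq_bigr => l _; rewrite !mxE mulrC.
  apply/eqP => E; have := congr1 (fun M0 : 'M[C]_(1,n) => M0 0 i) E; rewrite !mxE => /eqP.
  by rewrite gt_eqF.
have gapsE : (forall k, gap k = 0) <->
     (forall k l : 'I_n, r k = r l) \/
     exists t : 'I_n, [/\ (1 <= t)%N, (t <= i)%N,
        (forall k : 'I_n, (k < t)%N -> A k k = M),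
        (forall k l : 'I_n, (l < t)%N -> k != l -> A k l = N) &
        (forall k : 'I_n, (t <= k)%N -> r k = r t)].
  split.
    move=> hg.
    have hterm k l : (bnd k l - A k l) * e l = 0 by have [h _] := (gapP k).1 (hg k); exact: h.
    have hw k : w k = 0 by have [_ h] := (gapP k).1 (hg k); exact: h.
    have [t /eqP rt tmin] := @arg_minnP _ i (fun j => r j == r i) (fun j => nat_of_ord j) (eqxx _).
    have ti : (t <= i)%N by apply: tmin.
    have Rt (k : 'I_n) : (t <= k)%N -> r k = r i.
      move=> tk; case: (ltnP k i) => ki.
        apply: le_anti; apply/andP; split; first by rewrite -rt; exact: hsorted.
        by apply: hsorted; exact: ltnW.
      have := hw k; rewrite /w /e ltnNge ki /= mulr0 addr0 => /eqP.
      by rewrite subr_eq0 eq_sym => /eqP.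
    have en0 (l : 'I_n) : (l < t)%N -> e l != 0.
      move=> lt; have li : (l < i)%N := leq_trans lt ti.
      rewrite /e li mulf_neq0 ?invr_eq0 // subr_eq0; apply/negP => rl.
      by have := tmin l rl; rewrite leqNgt lt.
    case: (ltnP 0 t) => t0.
      right; exists t; split => //.
      - move=> k kt; have := hterm k k; rewrite /bnd eqxx => /eqP.
        by rewrite mulf_eq0 (negbTE (en0 k kt)) orbF subr_eq0 => /eqP ->.
      - move=> k l lt kl; have := hterm k l; rewrite /bnd (negbTE kl) => /eqP.
        by rewrite mulf_eq0 (negbTE (en0 l lt)) orbF subr_eq0 => /eqP ->.
      - by move=> k tk; rewrite Rt // rt.
    by left => k l; rewrite !Rt // (leq_trans t0 (leq0n _)).
  case => [hall | [t [t1 ti hd ho hr]]] k; apply/gapP.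
    have e_eq l : e l = 0 by rewrite /e (hall l i) subrr mul0r if_same.
    by split; [move=> l; rewrite e_eq mulr0 | rewrite /w e_eq mulr0 addr0 (hall i k) subrr].
  have rt : r t = r i by rewrite (hr i ti).
  have e_ge (l : 'I_n) : (t <= l)%N -> e l = 0.
    by move=> tl; rewrite /e (hr l tl) rt subrr mul0r if_same.
  split.
    move=> l; case: (ltnP l t) => lt; last by rewrite e_ge // mulr0.
    rewrite /bnd; case: eqP => [kl|/eqP kl]; last by rewrite ho // subrr mul0r.
    by rewrite -kl hd ?subrr ?mul0r // kl.
  case: (ltnP k i) => ki; first exact: wlt.
  by rewrite /w e_ge ?(leq_trans ti ki) // mulr0 addr0 (hr k (leq_trans ti ki)) rt subrr.
split => //; split => [/eq_gaps/gapsE | /gapsE/gaps_eq] //.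
Qed.
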